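(* For every integer $n\ge 0$, $$\Phi^{(3)}[a, a'; b, b'; cq^{-n}; x, y] = \frac{1}{(q/c; q)_n} \sum_{k=0}^n \begin{bmatrix} n \\ k \end{bmatrix} (-c)^{k-n} q^{\binom{n+1-k}{2}} \Phi^{(3)}[a, a'; b, b'; c; xq^k, yq^k]$$ and $$\Phi^{(3)}[a, a'; b, b'; cq^n; x, y] = \sum_{k=0}^n \begin{bmatrix} n \\ k \end{bmatrix} c^k q^{2\binom{k}{2}} (cq^k; q)_{n-k}\, \Phi^{(3)}[a, a'; b, b'; cq^k; xq^k, yq^k].$$
   Context: Let $q$ be a complex number with $0<|q|<1$. For complex $z$ and integer $m\ge 0$, $(z;q)_m=\prod_{j=0}^{m-1}(1-zq^j)$, with $(z;q)_0=1$. For integers $0\le k\le n$, $\begin{bmatrix} n \\ k \end{bmatrix}=\frac{(q;q)_n}{(q;q)_k(q;q)_{n-k}}$ is the $q$-binomial coefficient, and $\binom{j}{2}=j(j-1)/2$. The $q$-Appell function $\Phi^{(3)}$ is $$\Phi^{(3)}[a, a'; b, b'; c; x, y] = \sum_{m, n \geq 0} \frac{(a; q)_m (a'; q)_n (b; q)_m (b'; q)_n}{(q; q)_m (q; q)_n (c; q)_{m+n}} x^m y^n.$$ Identities are understood as identities of power series in $x,y$ (formal, or convergent for small $|x|,|y|$), with complex parameters chosen so that no denominator occurring vanishes. *)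

(* Defs.v *)
From mathcomp Require Import all_boot all_order all_algebra.
From mathcomp Require Import complex.
From mathcomp Require Import reals.
Set Implicit Arguments. Unset Strict Implicit. Unset Printing Implicit Defensive.
Import Order.TTheory GRing.Theory Num.Theory.
Local Open Scope ring_scope.
Local Open Scope complex_scope.

Definition qpoch {C : comNzRingType} (z q : C) (m : nat) : C :=
  \prod_(j < m) (1 - z * q ^+ j).

Definition qbinom {C : fieldType} (q : C) (n k : nat) : C :=
  qpoch q q n / (qpoch q q k * qpoch q q (n - k)).

(* A formal power series in two variables x, y, given by its coefficients:
   F m n is the coefficient of x^m y^n. *)
Definition fps2 (C : Type) := nat -> nat -> C.

Definition Phi3 {C : fieldType} (q a a' b b' c : C) : fps2 C :=
  fun m n => qpoch a q m * qpoch a' q n * qpoch b q m * qpoch b' q n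
             / (qpoch q q m * qpoch q q n * qpoch c q (m + n)).

(* Substitution x -> u x, y -> v y in a formal series: F(ux, vy). *)
Definition subst2 {C : comNzRingType} (u v : C) (F : fps2 C) : fps2 C :=
  fun m n => u ^+ m * v ^+ n * F m n.

(* Main.v *)
Require Import Defs.
From mathcomp Require Import all_boot all_order all_algebra.
From mathcomp Require Import complex reals.
From mathcomp Require Import ring lra zify.
Import Order.TTheory GRing.Theory Num.Theory.
Local Open Scope ring_scope.

Section QB.
Variable C : fieldType.
Variable q : C.

Fixpoint G (n k : nat) : C :=
  match n, k with
  | 0, 0 => 1
  | 0, _.+1 => 0
  | _.+1, 0 => 1
  | n'.+1, k'.+1 => G n' k' + q ^+ k'.+1 * G n' k'.+1
  end.

Lemma G_gt {n k} : (n < k)%N -> G n k = 0.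
Proof.
elim: n k => [|n IH] [|k] //= H.
by rewrite !IH ?mulr0 ?addr0 // ltnW.
Qed.

Lemma G_rec n k : G n.+1 k = (if k is k'.+1 then G n k' else 0) + q ^+ k * G n k.
Proof. by case: k => [|k] /=; [case: n => *; rewrite add0r expr0 mul1r|]. Qed.

Lemma qpoch0 x : qpoch x q 0 = 1.
Proof. by rewrite /qpoch big_ord0. Qed.

Lemma qpochSr x m : qpoch x q m.+1 = qpoch x q m * (1 - x * q ^+ m).
Proof. by rewrite /qpoch big_ord_recr. Qed.

Lemma qpochSl x m : qpoch x q m.+1 = (1 - x) * qpoch (x * q) q m.
Proof.
rewrite /qpoch big_ord_recl expr0 mulr1; congr (_ * _).
by apply: eq_bigr => i _; rewrite /bump /= exprS mulrA.
Qed.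

Lemma qpoch_add x m N : qpoch x q (m + N) = qpoch x q m * qpoch (x * q ^+ m) q N.
Proof.
rewrite /qpoch big_split_ord; congr (_ * _).
by apply: eq_bigr => i _; rewrite /= exprD mulrA.
Qed.

Lemma qpoch_shift x m N :
  qpoch x q m * qpoch (x * q ^+ m) q N = qpoch x q N * qpoch (x * q ^+ N) q m.
Proof. by rewrite -!qpoch_add addnC. Qed.

Lemma sum_G_step n (F : nat -> C) :
  \sum_(k < n.+2) G n.+1 k * F k =
  \sum_(k < n.+1) G n k * F k.+1 + \sum_(k < n.+1) q ^+ k * G n k * F k.
Proof.
under eq_bigr do rewrite G_rec mulrDl.
rewrite big_split /=; congr (_ + _).
  by rewrite big_ord_recl /= mul0r add0r.
by rewrite big_ord_recr /= (G_gt (ltnSn n)) mulr0 mul0r addr0.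
Qed.

Lemma Gmul (Hq : forall m, qpoch q q m != 0) n k : (k <= n)%N ->
  G n k * (qpoch q q k * qpoch q q (n - k)) = qpoch q q n.
Proof.
elim: n k => [|n IH] [|k] //=.
- by move=> _; rewrite !qpoch0 !mulr1.
- by move=> _; rewrite !qpoch0 !mul1r subn0.
rewrite ltnS subSS => Hk.
case: (ltngtP k n) Hk => // [Hkn|->] _.
- have IHk := IH k (ltnW Hkn).
  have IHk1 := IH k.+1 Hkn.
  have e : (n - k = (n - k.+1).+1)%N by lia.
  rewrite e qpochSr in IHk; rewrite e !qpochSr.
  rewrite qpochSr in IHk1.
  have eq : q ^+ k.+1 * q ^+ (n - k.+1).+1 = q ^+ n.+1.
    by rewrite -exprD; congr (_ ^+ _); lia.
  transitivity (G n k * (qpoch q q k * (qpoch q q (n - k.+1) *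
     (1 - q * q ^+ (n - k.+1)))) * (1 - q * q ^+ k) +
     q ^+ k.+1 * (1 - q * q ^+ (n - k.+1)) *
     (G n k.+1 * (qpoch q q k * (1 - q * q ^+ k) * qpoch q q (n - k.+1)))).
    by ring.
  rewrite IHk IHk1 -!exprS.
  by rewrite -eq; ring.
- rewrite (G_gt (ltnSn n)) mulr0 addr0 subnn qpoch0 mulr1.
  have := IH n (leqnn n); rewrite subnn qpoch0 mulr1 => IHn.
  by rewrite qpochSr mulrA IHn.
Qed.

Lemma G_qbinom (Hq : forall m, qpoch q q m != 0) n k : (k <= n)%N ->
  qbinom q n k = G n k.
Proof.
move=> Hk; rewrite /qbinom -(@Gmul Hq n k Hk) mulfK //.
by rewrite mulf_neq0.
Qed.

Lemma S_lemma n : forall w,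
  \sum_(k < n.+1) G n k * (q ^+ (2 * 'C(k, 2)) * w ^+ k * qpoch (w * q ^+ k) q (n - k)) = 1.
Proof.
elim: n => [|n IH] w.
  by rewrite big_ord1 /= qpoch0 (_ : 'C(0, 2) = 0%N) // !expr0 !mulr1.
rewrite (@sum_G_step n (fun k => q ^+ (2 * 'C(k, 2)) * w ^+ k * qpoch (w * q ^+ k) q (n.+1 - k))) -(IH (w * q)) -big_split /=.
apply: eq_bigr => [[k Hk]] _ /=.
have e1 : (n.+1 - k = (n - k).+1)%N by lia.
rewrite e1 subSS qpochSl.
have e2 : q ^+ (2 * 'C(k.+1, 2)) = q ^+ (2 * 'C(k, 2)) * q ^+ k * q ^+ k.
  by rewrite binS bin1 -!exprD; congr (_ ^+ _); lia.
have e3 : w * q ^+ k.+1 = w * q * q ^+ k by rewrite exprS; ring.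
have e4 : w * q ^+ k * q = w * q * q ^+ k by rewrite -mulrA -exprSr exprS mulrA.
rewrite e2 e3 e4 exprMn (exprS w); ring.
Qed.

Lemma Cauchy n : forall x,
  \sum_(k < n.+1) G n k * ((- x) ^+ k * q ^+ 'C(k, 2)) = qpoch x q n.
Proof.
elim: n => [|n IH] x.
  by rewrite big_ord1 /= qpoch0 (_ : 'C(0, 2) = 0%N) // !expr0 !mulr1.
rewrite (@sum_G_step n (fun k => (- x) ^+ k * q ^+ 'C(k, 2))) qpochSl -(IH (x * q)) mulr_sumr -big_split /=.
apply: eq_bigr => [[k Hk]] _ /=.
have e2 : q ^+ 'C(k.+1, 2) = q ^+ 'C(k, 2) * q ^+ k.
  by rewrite binS bin1 -!exprD addnC.
rewrite e2 exprS -mulNr exprMn; ring.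
Qed.

Lemma binid n k : (k <= n)%N ->
  (n * k + 'C(n.+1 - k, 2) = 'C(n.+1, 2) + 'C(k, 2))%N.
Proof.
elim: k => [|k IH] Hk; first by rewrite muln0 subn0 bin0n addn0.
have := IH (ltnW Hk).
have e : (n.+1 - k = (n - k).+1)%N by lia.
have h1 : 'C(n.+1 - k, 2) = ('C(n - k, 2) + (n - k))%N by rewrite e binS bin1.
have h2 : 'C(k.+1, 2) = ('C(k, 2) + k)%N by rewrite binS bin1.
rewrite h1 h2 subSS mulnS.
lia.
Qed.

Lemma Cauchy2 n x :
  \sum_(k < n.+1) G n k * (- (x * q ^+ n)) ^+ k * q ^+ 'C(n.+1 - k, 2) =
  q ^+ 'C(n.+1, 2) * qpoch x q n.
Proof.
rewrite -Cauchy mulr_sumr; apply: eq_bigr => [[k Hk]] _ /=.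
have e := @binid n k Hk.
have e' : q ^+ (n * k) * q ^+ 'C(n.+1 - k, 2) = q ^+ 'C(n.+1, 2) * q ^+ 'C(k, 2).
  by rewrite -!exprD e.
rewrite -mulNr exprMn -exprM.
transitivity (G n k * (- x) ^+ k * (q ^+ (n * k) * q ^+ 'C(n.+1 - k, 2))).
  by ring.
rewrite e'; ring.
Qed.

Lemma prod_aux n : forall d,
  \prod_(j < n) (q ^+ j.+1 - d * q ^+ n) = q ^+ 'C(n.+1, 2) * qpoch d q n.
Proof.
elim: n => [|n IH] d.
  by rewrite big_ord0 qpoch0 bin_small // expr0 mulr1.
rewrite big_ord_recl.
have -> : \prod_(i < n) (q ^+ (bump 0 i).+1 - d * q ^+ n.+1) =
          \prod_(i < n) (q * (q ^+ i.+1 - d * q ^+ n)).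
  by apply: eq_bigr => i _; rewrite /bump /= !exprS; ring.
rewrite big_split /= prodr_const card_ord IH qpochSr.
rewrite (binS n.+1 1) bin1 exprD !exprS; ring.
Qed.

Lemma F2 (q0 : q != 0) n d : d != 0 ->
  qpoch (q / (d * q ^+ n)) q n * (- (d * q ^+ n)) ^+ n = q ^+ 'C(n.+1, 2) * qpoch d q n.
Proof.
move=> d0; rewrite -prod_aux /qpoch.
have -> : (- (d * q ^+ n)) ^+ n = \prod_(j < n) (- (d * q ^+ n)).
  by rewrite prodr_const card_ord.
rewrite -big_split /=; apply: eq_bigr => i _.
rewrite exprS; field.
by rewrite d0 expf_neq0.
Qed.

End QB.

Arguments G {C} q n k.
Arguments G_qbinom {C q} Hq {n k}.
Arguments Cauchy2 {C} q n x.
Arguments S_lemma {C} q n w.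
Arguments qpoch_shift {C} q x m N.
Arguments F2 {C q} q0 n d.
Theorem theorem13 (R : realType) (q a a' b b' c : R[i]) (n : nat) :
  0 < `|q| < 1 ->
  ((c != 0 ->
    (forall j : nat, qpoch c q j != 0) ->
    (forall j : nat, qpoch (c * q ^- n) q j != 0) ->
    qpoch (q / c) q n != 0 ->
    forall i j : nat,
     Phi3 q a a' b b' (c * q ^- n) i j =
     (qpoch (q / c) q n)^-1 *
       \sum_(k < n.+1) qbinom q n k * (- c) ^ (k%:Z - n%:Z)
          * q ^+ 'C(n.+1 - k, 2)
          * subst2 (q ^+ k) (q ^+ k) (Phi3 q a a' b b' c) i j)
  /\
   ((forall k j : nat, (k <= n)%N -> qpoch (c * q ^+ k) q j != 0) ->
    forall i j : nat,
     Phi3 q a a' b b' (c * q ^+ n) i j =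
     \sum_(k < n.+1) qbinom q n k * c ^+ k * q ^+ (2 * 'C(k, 2))
          * qpoch (c * q ^+ k) q (n - k)
          * subst2 (q ^+ k) (q ^+ k) (Phi3 q a a' b b' (c * q ^+ k)) i j)).
Proof.
move=> /andP[q0 q1].
have qn0 : q != 0 by rewrite -normr_gt0.
have qm1 : forall m, q ^+ m.+1 != 1.
  move=> m; apply/eqP => h.
  have := exprn_ilt1 m.+1 (ltW q0) q1.
  by rewrite -normrX h normr1 ltxx.
have qpq : forall m, qpoch q q m != 0.
  move=> m; apply/prodf_neq0 => j _.
  by rewrite -exprS subr_eq0 eq_sym qm1.
have Gq : forall k : 'I_n.+1, qbinom q n k = G q n k.
  by move=> [k Hk]; apply: G_qbinom.
have zk : forall i j k : nat, (q ^+ k) ^+ i * (q ^+ k) ^+ j = (q ^+ (i + j)) ^+ k.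
  by move=> i j k; rewrite -!exprM -exprD mulnDl mulnC (mulnC k j).
split.
- move=> c0 Hc Hd Hqc i j.
  rewrite /Phi3 /subst2.
  have Q0 : qpoch q q i * qpoch q q j != 0 by rewrite mulf_neq0.
  set Q := qpoch q q i * qpoch q q j in Q0 *.
  set P := qpoch a q i * qpoch a' q j * qpoch b q i * qpoch b' q j.
  clearbody P Q.
  under eq_bigr do rewrite zk.
  move: Hd; set d := c * q ^- n => Hd.
  have ecd : c = d * q ^+ n by rewrite /d mulfVK // expf_neq0.
  set N := (i + j)%N; set z := q ^+ N.
  have Nc0 : -c != 0 by rewrite oppr_eq0.
  rewrite (eq_bigr (fun k : 'I_n.+1 => ((- c) ^+ n)^-1 * (P / (Q * qpoch c q N)) *
     (G q n k * (- (d * z * q ^+ n)) ^+ k * q ^+ 'C(n.+1 - k, 2)))); last first.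
    move=> k _; rewrite Gq expfzDr // -exprnP -exprnN.
    have -> : d * z * q ^+ n = c * z by rewrite mulrAC -ecd.
    rewrite -mulNr exprMn; ring.
  rewrite -mulr_sumr Cauchy2.
  have F1 := qpoch_shift q d N n.
  rewrite -ecd -/z in F1.
  have d0 : d != 0 by apply: contraNneq c0 => h; rewrite ecd h mul0r.
  have F2d := F2 qn0 n d d0.
  rewrite -ecd in F2d.
  have E : qpoch (d * z) q n = qpoch d q n * qpoch c q N / qpoch d q N.
    by rewrite -F1 [qpoch d q N * _]mulrC mulfK.
  have E2 : qpoch (q / c) q n = q ^+ 'C(n.+1, 2) * qpoch d q n / (- c) ^+ n.
    by rewrite -F2d mulfK // expf_neq0.
  rewrite E E2.
  by field; rewrite !Hd Hc Q0 !expf_neq0.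
- move=> Hc i j.
  rewrite /Phi3 /subst2.
  have Q0 : qpoch q q i * qpoch q q j != 0 by rewrite mulf_neq0.
  set Q := qpoch q q i * qpoch q q j in Q0 *.
  set P := qpoch a q i * qpoch a' q j * qpoch b q i * qpoch b' q j.
  clearbody P Q.
  under eq_bigr do rewrite zk.
  set N := (i + j)%N; set z := q ^+ N.
  rewrite (eq_bigr (fun k : 'I_n.+1 => P / (Q * qpoch (c * q ^+ n) q N) *
     (G q n k * (q ^+ (2 * 'C(k, 2)) * (c * z) ^+ k * qpoch (c * z * q ^+ k) q (n - k))))); last first.
    move=> k _; rewrite Gq; case: k => k Hk /=.
    have Hkn : (k <= n)%N by [].
    have F := qpoch_shift q (c * q ^+ k) (n - k) N.
    rewrite -mulrA -exprD subnKC // -/z in F.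
    have e : c * q ^+ k * z = c * z * q ^+ k by rewrite mulrAC.
    rewrite e in F.
    have E : qpoch (c * q ^+ k) q (n - k) =
       qpoch (c * q ^+ k) q N * qpoch (c * z * q ^+ k) q (n - k) / qpoch (c * q ^+ n) q N.
      by rewrite -F mulfK // Hc.
    rewrite E exprMn.
    field.
    by rewrite !Hc // Q0.
  by rewrite -mulr_sumr S_lemma mulr1.
Qed.
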